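(* Let $x_{k+1}=A_kx_k+b_ku_k$, $y_k=c_kx_k$ ($k\in\mathbb{Z}$) be a completely controllable discrete-time system with $A_k\in\mathbb{R}^{n\times n}$, $b_k\in\mathbb{R}^{n\times1}$, $c_k\in\mathbb{R}^{1\times n}$. For $k\in\mathbb{Z}$ let $W_k=[\,b_k,\ A_kb_{k-1},\ A_kA_{k-1}b_{k-2},\ \dots,\ A_k\cdots A_{k-n+2}b_{k-n+1}\,]$ and define scalars by $(\alpha_{k,1},\alpha_{k-1,2},\dots,\alpha_{k-n+1,n})^T=W_k^{-1}A_kW_{k-1}(0,\dots,0,1)^T$. Then the system is algebraically equivalent to a system $(\tilde A_k,\tilde b_k,\tilde c_k)_{k\in\mathbb{Z}}$ where $\tilde b_k=(0,\dots,0,1)^T$ and $\tilde A_k$ is the matrix with ones on the superdiagonal (entries $(i,i+1)$, $1\le i\le n-1$), zeros elsewhere in the first $n-1$ rows, and last row $(\alpha_{k,1},\alpha_{k,2},\dots,\alpha_{k,n})$.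
   Context: Complete controllability: for every $k\in\mathbb{Z}$ and every $\xi_s,\xi_f\in\mathbb{R}^n$ there are controls $u_k,\dots,u_{k+n-1}$ with $x_k=\xi_s\Rightarrow x_{k+n}=\xi_f$ (for such systems every $W_k$ is invertible). Two systems $(A_k,b_k,c_k)$ and $(\tilde A_k,\tilde b_k,\tilde c_k)$ are algebraically equivalent if there are invertible $T_k$ ($k\in\mathbb{Z}$) with $\tilde A_k=T_{k+1}A_kT_k^{-1}$, $\tilde b_k=T_{k+1}b_k$, $\tilde c_k=c_kT_k^{-1}$. *)

(* Defs.v *)
From HB Require Import structures.
From mathcomp Require Import all_boot all_order all_algebra.
From mathcomp Require Import reals.
Set Implicit Arguments. Unset Strict Implicit. Unset Printing Implicit Defensive.
Import Order.TTheory GRing.Theory Num.Theory.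
Local Open Scope ring_scope.

Section Sys.
Variables (R : realType) (n : nat).
Variables (A : int -> 'M[R]_n) (b : int -> 'cV[R]_n).

Fixpoint traj (u : int -> R) (k : int) (xi : 'cV[R]_n) (j : nat) : 'cV[R]_n :=
  match j with
  | 0%N => xi
  | j'.+1 => A (k + j'%:Z) *m traj u k xi j' + u (k + j'%:Z) *: b (k + j'%:Z)
  end.

Definition completely_controllable : Prop :=
  forall (k : int) (xs xf : 'cV[R]_n),
    exists u : int -> R, traj u k xs n = xf.

Fixpoint prodA (k : int) (j : nat) : 'M[R]_n :=
  match j with
  | 0%N => 1%:M
  | j'.+1 => A k *m prodA (k - 1) j'
  end.

Definition Wmx (k : int) : 'M[R]_n :=
  \matrix_(i < n, j < n) (prodA k j *m b (k - j%:Z)) i ord0.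

Definition e_last : 'cV[R]_n := \col_(i < n) (i.+1 == n)%:R.

(* v_k = W_k^{-1} A_k W_{k-1} e_n = (alpha_{k,1}, alpha_{k-1,2}, ..., alpha_{k-n+1,n})^T *)
Definition vvec (k : int) : 'cV[R]_n :=
  invmx (Wmx k) *m A k *m Wmx (k - 1) *m e_last.

(* alpha_{m, j+1} (j 0-based) = (v_{m+j})_j *)
Definition alpha (m : int) (j : 'I_n) : R := vvec (m + j%:Z) j ord0.

Definition Atilde (k : int) : 'M[R]_n :=
  \matrix_(i < n, j < n) (if (i.+1 < n)%N then (j == i.+1 :> nat)%:R else alpha k j).

Definition btilde (k : int) : 'cV[R]_n := e_last.
End Sys.

Definition alg_equiv (R : realType) (n : nat)
  (A : int -> 'M[R]_n) (b : int -> 'cV[R]_n) (c : int -> 'rV[R]_n)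
  (At : int -> 'M[R]_n) (bt : int -> 'cV[R]_n) (ct : int -> 'rV[R]_n) : Prop :=
  exists T : int -> 'M[R]_n,
    (forall k, T k \in unitmx) /\
    (forall k, At k = T (k + 1) *m A k *m invmx (T k)) /\
    (forall k, bt k = T (k + 1) *m b k) /\
    (forall k, ct k = c k *m invmx (T k)).

(* Main.v *)
Require Import Defs.
From mathcomp Require Import all_boot all_order all_algebra reals.
From mathcomp Require Import fingroup perm.
From mathcomp Require Import zify.
Set Implicit Arguments. Unset Strict Implicit. Unset Printing Implicit Defensive.
Import Order.TTheory GRing.Theory Num.Theory.
Local Open Scope ring_scope.

Lemma colM (R : pzRingType) m p q (j : 'I_q) (X : 'M[R]_(m, p)) (Y : 'M[R]_(p, q)) :
  col j (X *m Y) = X *m col j Y.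
Proof. by rewrite !colE mulmxA. Qed.

Lemma mulmx_sum_col (R : comPzRingType) m p (X : 'M[R]_(m, p)) (u : 'cV[R]_p) :
  X *m u = \sum_i u i 0 *: col i X.
Proof.
apply/colP => r; rewrite !mxE summxE; apply: eq_bigr => i _.
by rewrite !mxE mulrC.
Qed.

Section Main.
Variables (R : realType) (n' : nat).
Local Notation n := n'.+1.
Variables (A : int -> 'M[R]_n) (b : int -> 'cV[R]_n).
Local Notation W := (Wmx A b).
Local Notation pA := (prodA A).

Lemma colW m (j : 'I_n) : col j (W m) = pA m j *m b (m - j%:Z).
Proof. by apply/colP => i; rewrite !mxE. Qed.

Lemma prodA_comp m i j : pA m i *m pA (m - i%:Z) j = pA m (i + j).
Proof.
elim: i m => [|i IH] m /=; first by rewrite mul1mx subr0.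
rewrite -mulmxA; have -> : m - (i.+1)%:Z = m - 1 - i%:Z by lia.
by rewrite IH.
Qed.

Lemma traj0 u k j : traj A b u k 0 j =
  \sum_(i < j) u (k + i%:Z) *: (pA (k + j%:Z - 1) (j - 1 - i) *m b (k + i%:Z)).
Proof.
elim: j => [|j IH] /=; first by rewrite big_ord0.
rewrite IH big_ord_recr /= mulmx_sumr; congr (_ + _).
  apply: eq_bigr => i _; rewrite -scalemxAr mulmxA; congr (_ *: (_ *m _)).
  have -> : (j.+1 - 1 - i = (j - 1 - i).+1)%N by have := ltn_ord i; lia.
  rewrite /=; have -> : k + (j.+1)%:Z - 1 = k + j%:Z by lia.
  done.
have -> : (j.+1 - 1 - j = 0)%N by lia.
by rewrite /= mul1mx.
Qed.


Lemma traj_W u k : traj A b u k 0 n =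
  W (k + n%:Z - 1) *m \col_(c < n) u (k + n%:Z - 1 - c%:Z).
Proof.
rewrite traj0 [RHS]mulmx_sum_col.
rewrite (reindex_inj rev_ord_inj) /=; apply: eq_bigr => i _.
rewrite colW !mxE; congr (_ *: (_ *m b _)).
- congr u; have := ltn_ord i; lia.
- congr pA; have := ltn_ord i; lia.
- have := ltn_ord i; lia.
Qed.

Lemma W_unit : completely_controllable A b -> forall m, W m \in unitmx.
Proof.
move=> cc m.
have surj : forall xf : 'cV[R]_n, exists w, W m *m w = xf.
  move=> xf; have [u hu] := cc (m - n%:Z + 1) 0 xf.
  exists (\col_c u ((m - n%:Z + 1) + n%:Z - 1 - c%:Z)); rewrite -hu traj_W.
  have e : m - n%:Z + 1 + n%:Z - 1 = m by lia.
  by rewrite e.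
have [f hf] := fin_all_exists (fun j : 'I_n => surj (col j 1%:M)).
have [] := @mulmx1_unit _ _ (W m) (\matrix_(i, j) f j i 0) => //.
apply/matrixP => i j; rewrite !mxE.
have := congr1 (fun M : 'cV_n => M i 0) (hf j); rewrite !mxE => <-.
by apply: eq_bigr => l _; rewrite !mxE.
Qed.

Hypothesis Wu : forall m, W m \in unitmx.
Local Notation Mm m := (invmx (W m) *m A m *m W (m - 1)).

Lemma M_entry m (i c : 'I_n) :
  Mm m i c = if (c.+1 < n)%N then (i == c.+1 :> nat)%:R else vvec A b m i 0.
Proof.
case: ifP => hc.
- have -> : (Mm m) i c = (col c (Mm m)) i 0 by rewrite [RHS]mxE.
  rewrite colM colW -!mulmxA (mulmxA (A m)).
  have -> : A m *m pA (m - 1) c = pA m c.+1 by [].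
  have -> : m - 1 - c%:Z = m - (c.+1)%:Z by lia.
  have -> : pA m c.+1 *m b (m - (c.+1)%:Z) = col (inord c.+1) (W m).
    by rewrite colW inordK.
  rewrite -colM mulVmx // mxE mxE -(inj_eq val_inj) /= inordK //.
- have hc' : c = ord_max by apply: val_inj => /=; move: hc (ltn_ord c); rewrite ltnS; lia.
  rewrite /vvec [RHS]mxE big_ord_recr /= big1 ?add0r.
    by rewrite hc' [e_last _ _ _ _]mxE eqxx mulr1.
  move=> l _; rewrite [e_last _ _ _ _]mxE /=.
  have -> : (l.+1 == n) = false by apply/negbTE; have := ltn_ord l; lia.
  by rewrite mulr0.
Qed.

Lemma row_WA m (i : nat) : (i < n)%N ->
  row (inord i) (invmx (W m) *m A m) =
  (if i is i'.+1 then row (inord i') (invmx (W (m - 1))) else 0)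
  + vvec A b m (inord i) 0 *: row ord_max (invmx (W (m - 1))).
Proof.
move=> hi.
have -> : invmx (W m) *m A m = Mm m *m invmx (W (m - 1)).
  by rewrite -mulmxA mulmxV // mulmx1.
rewrite row_mul mulmx_sum_row big_ord_recr /=; congr (_ + _); last first.
  by rewrite mxE M_entry /= ltnn.
case: i hi => [|i] hi.
  apply: big1 => l _; rewrite mxE M_entry /= ltnS ltn_ord inordK //.
  by rewrite scale0r.
have hi' : (i < n')%N by [].
rewrite (bigD1 (Ordinal hi')) //= big1 ?addr0.
  rewrite mxE M_entry /= ltnS hi' inordK // eqxx scale1r.
  by congr row; apply: val_inj; rewrite /= inordK // ltnW.
move=> l hl; rewrite mxE M_entry /= ltnS ltn_ord inordK //.
have -> : (i.+1 == l.+1) = false.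
  apply/negbTE; apply: contra hl => /eqP [] e; apply/eqP/val_inj => /=; lia.
by rewrite scale0r.
Qed.

Lemma inord_max : inord n' = ord_max :> 'I_n.
Proof. by apply: val_inj; rewrite /= inordK. Qed.

Definition Hm (i : nat) (m : int) (j : nat) : 'rV[R]_n :=
  row (inord i) (invmx (W m) *m pA m j).
Definition Hr k i j := Hm i (k + j%:Z - 1) j.

Lemma Hr_rec k i j : (i < n)%N ->
  Hr k i j.+1 = (if i is i'.+1 then Hr k i' j else 0)
                + vvec A b (k + j%:Z) (inord i) 0 *: Hr k n' j.
Proof.
move=> hi; rewrite /Hr /Hm.
have -> : k + (j.+1)%:Z - 1 = k + j%:Z by lia.
rewrite /= mulmxA row_mul row_WA // mulmxDl -scalemxAl -row_mul inord_max.
by case: i hi => [|i] hi; rewrite ?mul0mx // -row_mul.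
Qed.

Lemma Hr_sum k i : (i < n)%N ->
  Hr k i i.+1 = \sum_(j < i.+1) alpha A b k (inord j) *: Hr k n' j.
Proof.
elim: i => [|i IH] hi.
  by rewrite Hr_rec // add0r big_ord1 /alpha inordK.
rewrite Hr_rec // IH; last exact: ltnW hi.
by rewrite [RHS]big_ord_recr /= /alpha inordK.
Qed.

Definition T k : 'M[R]_n := \matrix_(j < n) Hr k n' j.

Lemma T_b k : T (k + 1) *m b k = e_last R n.
Proof.
apply/colP => j.
have -> : (T (k+1) *m b k) j 0 = (row j (T (k+1) *m b k)) 0 0 by rewrite [RHS]mxE.
rewrite row_mul rowK /Hr /Hm -row_mul -mulmxA.
have -> : b k = b (k + 1 + j%:Z - 1 - j%:Z) by congr b; lia.
rewrite -colW -colM mulVmx // !mxE -(inj_eq val_inj) /= inordK //.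
by rewrite eqSS eq_sym.
Qed.

Lemma T_A k : T (k + 1) *m A k = Atilde A b k *m T k.
Proof.
apply/row_matrixP => i.
rewrite !row_mul rowK.
have -> : Hr (k + 1) n' i *m A k = Hr k n' i.+1.
  rewrite /Hr /Hm -row_mul -mulmxA.
  have -> : A k = pA (k + 1 + i%:Z - 1 - i%:Z) 1 by rewrite /= mulmx1; congr A; lia.
  rewrite prodA_comp addn1.
  by have -> : k + 1 + i%:Z - 1 = k + (i.+1)%:Z - 1 by lia.
case: (ltnP i.+1 n) => hi.
  have -> : row i (Atilde A b k) = row (inord i.+1) 1%:M.
    apply/rowP => j; rewrite !mxE hi -(inj_eq val_inj) /= inordK //.
    by rewrite eq_sym.
  by rewrite -row_mul mul1mx rowK inordK.
have ei : (i : nat) = n' by move: hi (ltn_ord i); rewrite ltnS; lia.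
rewrite mulmx_sum_row ei Hr_sum //; apply: eq_bigr => j _.
rewrite rowK inord_val !mxE ei ltnn.
done.
Qed.

Lemma mx_entry_rc m p q (X : 'M[R]_(m, p)) (Y : 'M[R]_(p, q)) i j :
  (X *m Y) i j = (row i X *m col j Y) 0 0.
Proof. by rewrite !mxE; apply: eq_bigr => l _; rewrite !mxE. Qed.

Lemma N_entry k (i j : 'I_n) : (i + j <= n')%N ->
  (T k *m W (k - 1)) i j = ((i + j)%N == n')%:R.
Proof.
move=> hij; rewrite mx_entry_rc rowK colW /Hr /Hm.
have -> : pA (k - 1) j = pA (k + i%:Z - 1 - i%:Z) j by congr pA; lia.
rewrite -row_mul -!mulmxA (mulmxA (pA _ i)) prodA_comp.
have -> : b (k - 1 - j%:Z) = b (k + i%:Z - 1 - (inord (i + j) : 'I_n)%:Z).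
  by congr b; rewrite inordK; lia.
have -> : pA (k + i%:Z - 1) (i + j) = pA (k + i%:Z - 1) (inord (i + j) : 'I_n).
  by rewrite inordK.
rewrite -colW -colM mulVmx // !mxE -(inj_eq val_inj) /= !inordK //.
by rewrite eq_sym.
Qed.

Lemma T_unit k : T k \in unitmx.
Proof.
suff : T k *m W (k - 1) \in unitmx by rewrite unitmx_mul => /andP [].
set N := T k *m W (k - 1).
pose s := perm (@rev_ord_inj n).
have hdet : \det (col_perm s N) = 1.
  rewrite det_trig.
    rewrite big1 // => i _; rewrite mxE permE N_entry /=.
      have -> : (i + (n - i.+1))%N = n' by have := ltn_ord i; lia.
      by rewrite eqxx.
    by have := ltn_ord i; lia.
  apply/is_trig_mxP => i j hij; rewrite mxE permE N_entry /=.
    by have := ltn_ord j; case: eqP => //; lia.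
  by have := ltn_ord j; lia.
rewrite unitmxE unitfE; apply/eqP => h0.
move: hdet; rewrite col_permE det_mulmx h0 mul0r => /eqP.
by rewrite eq_sym oner_eq0.
Qed.
End Main.

Theorem proposition1 (R : realType) (n : nat)
  (A : int -> 'M[R]_n) (b : int -> 'cV[R]_n) (c : int -> 'rV[R]_n) :
  completely_controllable A b ->
  exists ct : int -> 'rV[R]_n,
    alg_equiv A b c (Atilde A b) (btilde R n) ct.
Proof.
case: n A b c => [|n'] A b c cc.
  exists (fun _ => 0); exists (fun _ => 1%:M).
  split; first by move=> k; exact: unitmx1.
  split; first by move=> k; rewrite [LHS]flatmx0 [RHS]flatmx0.
  split; first by move=> k; rewrite [LHS]flatmx0 [RHS]flatmx0.
  by move=> k; apply/matrixP => i [] j hj.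
have Wu := W_unit cc.
exists (fun k => c k *m invmx (T A b k)); exists (T A b).
split; first by move=> k; exact: T_unit.
split; first by move=> k; rewrite (T_A Wu) mulmxK //; exact: T_unit.
split=> k //.
by rewrite (T_b Wu).
Qed.
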